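(* Let $n\ge2$, $\mathbb{Z}_n=\mathbb{Z}/n\mathbb{Z}$, $\mathcal{P}=\{(x_1,\dots,x_{n-1})\in\mathbb{Z}_n^{n-1}\mid x_1,\dots,x_{n-1}\text{ pairwise different}\}$ and $\mathcal{S}=\{r\in\mathbb{Z}_n^{n-1}\mid\exists\,x,y\in\mathcal{P}: r=x+y\}$. If $r=(r_1,\dots,r_{n-1})\in\mathbb{Z}_n^{n-1}$ satisfies $|\{r_1,\dots,r_{n-1}\}|\le2$, then $r\in\mathcal{S}$. *)

(* Defs.v *)
From mathcomp Require Import all_boot all_algebra.
Set Implicit Arguments. Unset Strict Implicit. Unset Printing Implicit Defensive.
Import GRing.Theory.
Local Open Scope ring_scope.

(* Z_n^{n-1}: finite functions from 'I_(n.-1) (indices 1..n-1, shifted to 0..n-2) to 'Z_n *)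
Definition vecZ (n : nat) := {ffun 'I_n.-1 -> 'Z_n}.

Definition inP (n : nat) (x : vecZ n) : Prop := injective x.

Definition inS (n : nat) (r : vecZ n) : Prop :=
  exists x y : vecZ n, inP x /\ inP y /\ forall i, r i = x i + y i.

(* Main.v *)
Require Import Defs.
From mathcomp Require Import all_boot all_algebra zify ring.
Set Implicit Arguments. Unset Strict Implicit. Unset Printing Implicit Defensive.
Import GRing.Theory.

Section NN.
Variables (n D : nat).
Hypothesis n0 : 0 < n.
Let g := gcdn D n.
Let o := n %/ g.

Lemma g_gt0 : 0 < g. Proof. by rewrite /g gcdn_gt0 n0 orbT. Qed.
Lemma n_og : n = o * g. Proof. by rewrite /o divnK // /g dvdn_gcdr. Qed.
Lemma D_g : D = D %/ g * g. Proof. by rewrite divnK // /g dvdn_gcdl. Qed.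
Lemma o_gt0 : 0 < o.
Proof. have := n0; rewrite n_og; case: o => //. Qed.

Lemma cop : coprime o (D %/ g).
Proof.
rewrite /coprime; apply/eqP/eqP; rewrite -(eqn_pmul2r g_gt0) mul1n.
by rewrite muln_gcdl -n_og -D_g gcdnC.
Qed.

Lemma Ninj i j : i < n -> j < n ->
  (i * D + i %/ o) %% n = (j * D + j %/ o) %% n -> i = j.
Proof.
wlog ij : i j / i <= j.
  move=> H hi hj e; case: (leqP i j) => c; first exact: H.
  by apply/esym/H => //; apply: ltnW.
move=> hi hj e.
have gn : g %| n by rewrite /g dvdn_gcdr.
have eg : i %/ o = j %/ o.
  have := congr1 (modn^~ g) e; rewrite !modn_dvdm //.
  have lg k : k < n -> k %/ o < g by move=> hk; rewrite ltn_divLR ?o_gt0 // mulnC -n_og.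
  by rewrite [D]D_g !mulnA !modnMDl !modn_small ?lg.
move: e; rewrite eg => /eqP; rewrite eqn_modDr eq_sym eqn_mod_dvd ?leq_mul2r ?ij ?orbT //.
rewrite -mulnBl {1}n_og [D]D_g mulnA dvdn_pmul2r ?g_gt0 // mulnC Gauss_dvdr ?cop //.
have lt : j - i < o.
  have := divn_eq i o; have := divn_eq j o; rewrite eg.
  have := ltn_pmod i o_gt0; have := ltn_pmod j o_gt0. lia.
move=> dv; apply/eqP; rewrite eqn_leq ij /=.
case: (posnP (j - i)) => [|p]; first by move/eqP; rewrite subn_eq0.
by have := dvdn_leq p dv; rewrite leqNgt lt.
Qed.
End NN.
Local Open Scope ring_scope.
Section NZ.
Variables (n D : nat).
Hypothesis n1 : (1 < n)%N.
Let g := gcdn D n.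
Let o := (n %/ g)%N.
Let n0 : (0 < n)%N. Proof. exact: ltnW. Qed.
Lemma g_gt0' : (0 < g)%N. Proof. by rewrite /g gcdn_gt0 n0 orbT. Qed.
Lemma n_og' : n = (o * g)%N. Proof. by rewrite /o divnK // /g dvdn_gcdr. Qed.
Lemma D_g' : D = (D %/ g * g)%N. Proof. by rewrite divnK // /g dvdn_gcdl. Qed.
Lemma o_gt0' : (0 < o)%N.
Proof. have := n0; rewrite n_og'; case: o => //. Qed.

Definition Nz (j : nat) : 'Z_n := ((j * D + j %/ o)%N)%:R.

Lemma mo0 m : (((m * o) * D)%N%:R : 'Z_n) = 0.
Proof.
have -> : (m * o * D = (m * (D %/ g)) * n)%N.
  by rewrite {1}[D]D_g' n_og'; ring.
by rewrite natrM pchar_Zp // mulr0.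
Qed.

Lemma Nsucc j : Nz j + D%:R = Nz (if o %| j.+1 then j.+1 - o else j.+1)%N.
Proof.
rewrite /Nz -natrD.
have -> : (j*D + j%/o + D = j.+1 * D + j %/ o)%N by rewrite mulSn; lia.
have hd := divnS j o_gt0'.
case: ifP hd => dv /= hd.
  move: dv => /dvdnP [q hq].
  have ej : (j %/ o = q - 1)%N by move: hd; rewrite hq mulnK ?o_gt0' //; lia.
  rewrite hq ej.
  have -> : (q*o - o = (q-1)*o)%N by rewrite mulnBl mul1n.
  rewrite mulnK ?o_gt0' // !natrD mo0 mo0 //.
by rewrite hd.
Qed.
Lemma Nz_inj i j : (i < n)%N -> (j < n)%N -> Nz i = Nz j -> i = j.
Proof.
move=> hi hj; rewrite /Nz => /(congr1 (@nat_of_ord _)); rewrite !val_Zp_nat //.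
exact: (Ninj n0).
Qed.
End NZ.

Local Open Scope ring_scope.

Lemma rank_lt (m : nat) (P : pred 'I_m) (i j : 'I_m) : P i -> (i < j)%N ->
  (#|[set l : 'I_m | (l < i)%N && P l]| < #|[set l : 'I_m | (l < j)%N && P l]|)%N.
Proof.
move=> Pi ij; apply: proper_card; apply/properP; split.
  apply/subsetP => l; rewrite !inE => /andP [li ->]; rewrite andbT.
  exact: ltn_trans li ij.
by exists i; rewrite !inE ?ij ?Pi // ltnn.
Qed.

Lemma rank_max (m : nat) (P : pred 'I_m) (i : 'I_m) : P i ->
  (#|[set l : 'I_m | (l < i)%N && P l]| < #|[set l : 'I_m | P l]|)%N.
Proof.
move=> Pi; apply: proper_card; apply/properP; split.
  by apply/subsetP => l; rewrite !inE => /andP [].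
by exists i; rewrite !inE ?Pi // ltnn.
Qed.

Lemma rank_inj (m : nat) (P : pred 'I_m) (i j : 'I_m) : P i -> P j ->
  #|[set l : 'I_m | (l < i)%N && P l]| = #|[set l : 'I_m | (l < j)%N && P l]| -> i = j.
Proof.
move=> Pi Pj e; case: (ltngtP i j) => c.
- by have := rank_lt Pi c; rewrite e ltnn.
- by have := rank_lt Pj c; rewrite e ltnn.
- exact: val_inj.
Qed.

Theorem proposition5p2 (n : nat) (hn : (1 < n)%N) (r : vecZ n) :
  (#|[set r i | i : 'I_n.-1]| <= 2)%N -> inS r.
Proof.
move=> hcard.
have n0 : (0 < n.-1)%N by move: hn; case: (n) => [|[|]].
pose i0 : 'I_n.-1 := Ordinal n0.
pose a := r i0.
have [b hb] : exists b, forall i, r i != a -> r i = b.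
  case: (pickP (fun i => r i != a)) => [i1 hi1 | hall]; last first.
    by exists a => i; rewrite hall.
  exists (r i1) => i hia; apply/eqP; apply/negPn/negP => hib.
  have : ([set a; r i1; r i] \subset [set r i | i : 'I_n.-1]).
    apply/subsetP => u; rewrite !inE => /orP [/orP [] |] /eqP ->;
      by apply/imsetP; eexists.
  move/subset_leq_card; rewrite setUC cardsU1 cards2 !inE.
  rewrite (negbTE hia) (negbTE hib) eq_sym hi1 /=.
  by move=> h; have := leq_trans h hcard.
pose D := val (b - a).
have hD : (D%:R : 'Z_n) = b - a.
  apply: ord_inj; rewrite val_Zp_nat // modn_small //.
  by have := ltn_ord (b - a); rewrite -/D Zp_cast.
pose k := #|[set i | r i == a]|.
pose rk (P : pred 'I_n.-1) i := #|[set l : 'I_n.-1 | (l < i)%N && P l]|.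
pose idx i := if r i == a then rk (fun l => r l == a) i
              else (k.+1 + rk (fun l => r l != a) i)%N.
have hkm : (k + #|[set i | r i != a]| = n.-1)%N.
  transitivity #|'I_n.-1|; last exact: card_ord.
  rewrite -(cardsC [set i | r i == a]); congr (_ + _)%N.
  by apply: eq_card => i; rewrite !inE.
have idxA i : r i == a -> (idx i < k)%N.
  by move=> h; rewrite /idx h; apply: (rank_max (P := fun l => r l == a)).
have idxB i : r i != a -> (k < idx i)%N.
  by move=> h; rewrite /idx (negbTE h) ltnS leq_addr.
have idxn i : (idx i < n)%N.
  case: (boolP (r i == a)) => h.
    by have := idxA i h; move: hkm hn; clear; lia.
  have := rank_max (P := fun l => r l != a) h.
  rewrite /idx (negbTE h); move: hkm hn; clear; rewrite /rk; move=> e h1 h2; rewrite -(leq_add2l k) e in h2; move: h2 h1; clear; lia.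
have idx_inj : injective idx.
  move=> i j e; case: (boolP (r i == a)) => hi; case: (boolP (r j == a)) => hj.
  - by move: e; rewrite /idx hi hj; apply: (rank_inj (P := fun l => r l == a)).
  - by have := idxA i hi; have := idxB j hj; rewrite e => h1 h2; have := ltn_trans h2 h1; rewrite ltnn.
  - by have := idxA j hj; have := idxB i hi; rewrite e => h1 h2; have := ltn_trans h2 h1; rewrite ltnn.
  - move: e; rewrite /idx (negbTE hi) (negbTE hj) => /eqP; rewrite eqn_add2l => /eqP.
    by apply: (rank_inj (P := fun l => r l != a)).
pose x : vecZ n := [ffun i => Nz n D (idx i)].
have xinj : injective x.
  move=> i j; rewrite !ffunE => /(Nz_inj hn (idxn i) (idxn j)); exact: idx_inj.
have mixed i j : r i == a -> r j != a -> r i - Nz n D (idx i) = r j - Nz n D (idx j) -> False.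
  move=> hi hj; rewrite (eqP hi) (hb j hj) => e.
  have e2 : Nz n D (idx j) = Nz n D (idx i) + D%:R.
    rewrite hD; have -> : Nz n D (idx j) = b - (b - Nz n D (idx j)) by ring. 
    by rewrite -e; ring.
  move: e2; rewrite Nsucc // => e2.
  set j' := (if _ then _ else _) in e2.
  have hj' : (j' <= k)%N.
    rewrite /j'; case: ifP => _; last exact: idxA.
    apply: leq_trans (leq_subr _ _) _; exact: idxA.
  have hj'n : (j' < n)%N.
    apply: (leq_ltn_trans hj'); apply: leq_trans (idxB j hj) _; exact: ltnW.
  have := Nz_inj hn (idxn j) hj'n e2 => ee.
  by have := idxB j hj; rewrite ee ltnNge hj'.
exists x, [ffun i => r i - x i]; split; first exact: xinj.
split; last by move=> i; rewrite !ffunE addrC subrK.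
move=> i j; rewrite !ffunE => e.
case: (boolP (r i == a)) => hi; case: (boolP (r j == a)) => hj.
- apply: idx_inj; apply: (Nz_inj (D := D) hn (idxn i) (idxn j)).
  by move: e; rewrite (eqP hi) (eqP hj) => /addrI /oppr_inj.
- by case: (mixed i j hi hj e).
- by case: (mixed j i hj hi (esym e)).
- apply: idx_inj; apply: (Nz_inj (D := D) hn (idxn i) (idxn j)).
  by move: e; rewrite (hb i hi) (hb j hj) => /addrI /oppr_inj.
Qed.
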